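(* Let $\mathbf{A}\in\mathbb{R}^{n\times n}$ be a symmetric positive semidefinite matrix, let $\mathbf{s}_0\in[-1,1]^n$ and let $k>0$ be an integer. Consider the problem of maximizing $\mathbf{s}^{\intercal}\mathbf{A}\mathbf{s}$ subject to $\mathbf{s}\in[-1,1]^n$ and $\|\mathbf{s}-\mathbf{s}_0\|_0\le k$. Then there exists an optimal solution $\mathbf{s}$ such that $\mathbf{s}(i)\in\{-1,1\}$ for all entries $i$ with $\mathbf{s}(i)\neq\mathbf{s}_0(i)$. In particular, if $\mathbf{s}_0\in\{-1,1\}^n$ or $k=n$, there exists an optimal solution $\mathbf{s}\in\{-1,1\}^n$.
   Context: $\|\cdot\|_0$ counts nonzero entries; $\mathbf{s}(i)$ is the $i$-th entry of $\mathbf{s}$. *)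

(* Defs.v *)
From HB Require Import structures.
From mathcomp Require Import all_boot all_order all_algebra.
From mathcomp Require Import reals.
Set Implicit Arguments. Unset Strict Implicit. Unset Printing Implicit Defensive.
Import Order.TTheory GRing.Theory Num.Theory.
Local Open Scope ring_scope.

Definition quad (R : realType) (n : nat) (A : 'M[R]_n) (s : 'cV[R]_n) : R :=
  (s^T *m A *m s) 0 0.

Definition psd (R : realType) (n : nat) (A : 'M[R]_n) : Prop :=
  A^T = A /\ forall x : 'cV[R]_n, 0 <= quad A x.

Definition in_box (R : realType) (n : nat) (s : 'cV[R]_n) : Prop :=
  forall i : 'I_n, -1 <= s i 0 <= 1.

Definition is_sign (R : realType) (n : nat) (s : 'cV[R]_n) : Prop :=
  forall i : 'I_n, s i 0 = 1 \/ s i 0 = -1.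

Definition l0dist (R : realType) (n : nat) (s s0 : 'cV[R]_n) : nat :=
  #|[set i : 'I_n | (s - s0) i 0 != 0]|.

Definition feasible (R : realType) (n : nat) (s0 : 'cV[R]_n) (k : nat)
  (s : 'cV[R]_n) : Prop :=
  in_box s /\ (l0dist s s0 <= k)%N.

Definition optimal (R : realType) (n : nat) (A : 'M[R]_n) (s0 : 'cV[R]_n)
  (k : nat) (s : 'cV[R]_n) : Prop :=
  feasible s0 k s /\ forall t : 'cV[R]_n, feasible s0 k t -> quad A t <= quad A s.

(* Main.v *)
Require Import Defs.
From HB Require Import structures.
From mathcomp Require Import all_boot all_order all_algebra.
From mathcomp Require Import reals.
From mathcomp Require Import ring lra.
Import Order.TTheory GRing.Theory Num.Theory.
Local Open Scope ring_scope.

Lemma arith (R : realType) (a b c x : R) : 0 <= a -> -1 <= x -> x <= 1 ->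
  exists y, (y = 1 \/ y = -1) /\ c + x * b + x ^+ 2 * a <= c + y * b + y ^+ 2 * a.
Proof.
move=> ha h1 h2.
have k1 : 0 <= a * ((1 - x) * (1 + x)) by apply: mulr_ge0 => //; apply: mulr_ge0; lra.
have [hb|hb] := lerP 0 b.
- exists 1; split; first by left.
  have k2 : 0 <= (1 - x) * b by apply: mulr_ge0 => //; lra.
  rewrite expr1n; rewrite expr2; lra.
- exists (-1); split; first by right.
  have k2 : 0 <= (1 + x) * (- b) by apply: mulr_ge0; lra.
  rewrite sqrrN expr1n expr2; lra.
Qed.

Section S.
Variables (R : realType) (n : nat) (A : 'M[R]_n).

Lemma quad_exp (u e : 'cV[R]_n) (x : R) :
  quad A (u + x *: e) = quad A u + x * (u^T *m A *m e + e^T *m A *m u) 0 0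
     + x ^+ 2 * quad A e.
Proof.
rewrite /quad !linearD /= !linearZ /= !mulmxDl.
have hD (M N : 'M[R]_1) : (M + N) 0 0 = M 0 0 + N 0 0 by rewrite mxE.
have hZ (a : R) (M : 'M[R]_1) : (a *: M) 0 0 = a * M 0 0 by rewrite mxE.
rewrite -!scalemxAl !hD !hZ !hD !hZ. ring.
Qed.

Definition setc (v : 'cV[R]_n) (i : 'I_n) (y : R) : 'cV[R]_n :=
  \col_j (if j == i then y else v j 0).

Lemma setc_dec v i y : setc v i y = setc v i 0 + y *: delta_mx i 0.
Proof.
apply/matrixP => j k; rewrite (ord1 k) !mxE /=.
by case: (j == i); rewrite /= ?mulr1 ?mulr0 ?add0r ?addr0.
Qed.

Lemma setc_id v i : setc v i (v i 0) = v.
Proof.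
apply/matrixP => j k; rewrite (ord1 k) !mxE.
by case: (j =P i) => [->|].
Qed.

Lemma round1 v i : psd A -> in_box v ->
  exists y : R, (y = 1 \/ y = -1) /\ quad A v <= quad A (setc v i y).
Proof.
move=> [_ HA] Hv.
set e := delta_mx i 0 : 'cV[R]_n.
have ha := HA e.
have q y : quad A (setc v i y) = quad A (setc v i 0) + y * ((setc v i 0)^T *m A *m e + e^T *m A *m (setc v i 0)) 0 0 + y ^+ 2 * quad A e.
  by rewrite setc_dec quad_exp.
move: (Hv i) => /andP [h1 h2].
have [y [Hy Hle]] := @arith R (quad A e) (((setc v i 0)^T *m A *m e + e^T *m A *m (setc v i 0)) 0 0) (quad A (setc v i 0)) (v i 0) ha h1 h2.
by exists y; split => //; rewrite -{1}(setc_id v i) (q (v i 0)) (q y).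
Qed.

Lemma round_seq (l : seq 'I_n) t : psd A -> in_box t -> exists v,
  [/\ in_box v, quad A t <= quad A v,
     forall i, i \in l -> v i 0 = 1 \/ v i 0 = -1
   & forall i, i \notin l -> v i 0 = t i 0].
Proof.
move=> HA Ht; elim: l => [|i l [v [Hv Hq Hl Hn]]].
  by exists t; split => //.
have [y [Hy Hq']] := round1 v i HA Hv.
exists (setc v i y); split.
- move=> j; rewrite mxE; case: (j == i); last exact: Hv.
  by case: Hy => ->; lra.
- exact: le_trans Hq'.
- move=> j; rewrite in_cons mxE; case: (j == i) => //= /Hl //.
- move=> j; rewrite in_cons negb_or mxE => /andP [/negbTE -> /Hn] //.
Qed.

Lemma seq_max (T : eqType) (f : T -> R) (s : seq T) x0 : x0 \in s ->
  exists2 x, x \in s & forall y, y \in s -> f y <= f x.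
Proof.
elim: s x0 => // a s IH x0 _.
case: s IH => [|b s] IH.
  by exists a => [|y]; rewrite ?inE ?eqxx // => /eqP ->.
have [x Hx Hm] := IH b (mem_head _ _).
have [le|lt] := lerP (f a) (f x).
  exists x; first by rewrite in_cons Hx orbT.
  by move=> y; rewrite in_cons => /orP [/eqP ->|/Hm].
exists a; first by rewrite in_cons eqxx.
move=> y; rewrite in_cons => /orP [/eqP ->|/Hm h] //.
exact: le_trans h (ltW lt).
Qed.

End S.

Definition mk {R : realType} {n : nat} (s0 : 'cV[R]_n) (g : {ffun 'I_n -> option bool}) : 'cV[R]_n :=
  \col_i (match g i with None => s0 i 0 | Some true => 1 | Some false => -1 end).

Definition feasb {R : realType} {n : nat} (s0 : 'cV[R]_n) (k : nat) (v : 'cV[R]_n) : bool :=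
  [forall i, (-1 <= v i 0 <= 1)] && (l0dist v s0 <= k)%N.

Lemma feasbP {R : realType} {n : nat} (s0 : 'cV[R]_n) k v : feasb s0 k v <-> feasible s0 k v.
Proof.
rewrite /feasb /feasible /in_box; split.
  by move=> /andP [/forallP H ->].
by move=> [H ->]; rewrite andbT; apply/forallP.
Qed.

Theorem lemmaB1 (R : realType) (n : nat) (A : 'M[R]_n) (s0 : 'cV[R]_n) (k : nat) :
  psd A -> in_box s0 -> (0 < k)%N ->
  (exists s : 'cV[R]_n, optimal A s0 k s /\
     forall i : 'I_n, s i 0 != s0 i 0 -> s i 0 = 1 \/ s i 0 = -1) /\
  (is_sign s0 \/ k = n -> exists s : 'cV[R]_n, optimal A s0 k s /\ is_sign s).
Proof.
move=> HA Hs0 Hk.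
set cands := [seq g <- enum {ffun 'I_n -> option bool} | feasb s0 k (mk s0 g)].
have g0in : [ffun => None] \in cands.
  rewrite mem_filter mem_enum andbT; apply/feasbP.
  have -> : mk s0 [ffun => None] = s0.
    by apply/matrixP => i j; rewrite (ord1 j) !mxE ffunE.
  split => //; rewrite /l0dist.
  have -> : [set i | (s0 - s0) i 0 != 0] = set0.
    by apply/setP => i; rewrite !inE subrr mxE eqxx.
  by rewrite cards0.
have key : forall t, feasible s0 k t -> exists g, g \in cands /\ quad A t <= quad A (mk s0 g).
  move=> t [Ht Htk].
  have [v [Hv Hq Hl Hn]] := @round_seq R n A (enum [pred i | t i 0 != s0 i 0]) t HA Ht.
  pose g := [ffun i => if v i 0 == s0 i 0 then None else Some (v i 0 == 1)].
  have Hsub : forall i, v i 0 != s0 i 0 -> t i 0 != s0 i 0.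
    move=> i; apply: contra => /eqP E.
    have : i \notin enum [pred i | t i 0 != s0 i 0] by rewrite mem_enum inE E eqxx.
    by move/Hn ->; rewrite E.
  have Hg : mk s0 g = v.
    apply/matrixP => i j; rewrite (ord1 j) !mxE ffunE.
    case: eqP => [->|/eqP ne] //.
    case: (boolP (v i 0 == 1)) => [/eqP -> //|ne1].
    have : i \in enum [pred i | t i 0 != s0 i 0] by rewrite mem_enum inE Hsub.
    by move/Hl => [E|->] //; rewrite E eqxx in ne1.
  exists g; split; last by rewrite Hg.
  rewrite mem_filter mem_enum andbT Hg; apply/feasbP; split => //.
  apply: leq_trans Htk; rewrite /l0dist; apply: subset_leq_card.
  by apply/subsetP => i; rewrite !inE !mxE !subr_eq0; apply: Hsub.
have [g Hg Hm] := @seq_max R _ (fun g => quad A (mk s0 g)) _ _ g0in.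
have Hopt : optimal A s0 k (mk s0 g).
  split; first by apply/feasbP; move: Hg; rewrite mem_filter => /andP [].
  move=> t /key [g' [Hg' Hq]]; exact: le_trans Hq (Hm _ Hg').
have Hprop : forall i, mk s0 g i 0 != s0 i 0 -> mk s0 g i 0 = 1 \/ mk s0 g i 0 = -1.
  move=> i; rewrite !mxE; case: (g i) => [[]|]; by [left|right|rewrite eqxx].
split; first by exists (mk s0 g).
case => [Hsg|Hkn].
  exists (mk s0 g); split => // i.
  case: (boolP (mk s0 g i 0 == s0 i 0)) => [/eqP ->|/Hprop //]; exact: Hsg.
have [v [Hv Hq Hl _]] := @round_seq R n A (enum 'I_n) _ HA Hopt.1.1.
exists v; split; last by move=> i; apply: Hl; rewrite mem_enum.
have Hf : feasible s0 k v.
  split => //; rewrite Hkn /l0dist; exact: leq_trans (max_card _) (eq_leq (card_ord n)).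
split => // t Ht; exact: le_trans (Hopt.2 t Ht) Hq.
Qed.
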